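(* Let $G(\mathcal V,\mathcal E)$ be a finite simple directed graph and $f\ge 0$ an integer, and assume Condition 1 holds for $G$. Let $F\subset\mathcal V$ and $F_1\subset\mathcal V-F$ with $|F|\le f$ and $|F_1|\le f$, and let $S$ be the set of nodes of a source component of the reduced graph $G_{F,F_1}$. Then $S \Rightarrow_{\mathcal V - F} \mathcal V-F-S$.
   Context: For disjoint sets $X,Y\subseteq\mathcal V$ with $Y$ non-empty, $X\rightarrow Y$ means that $X$ contains at least $f+1$ distinct nodes $i$ such that $(i,j)\in\mathcal E$ for some $j\in Y$. Condition 1: for every partition $L,C,R,F$ of $\mathcal V$ (with $C$ or $F$ possibly empty) such that $L,R$ are non-empty and $|F|\le f$, either $L\cup C\rightarrow R$ or $R\cup C\rightarrow L$. Reduced graph: $G_{F,F_1}$ has vertex set $\mathcal V-F$ and edge set $\mathcal E-\{(i,j): i\in F \text{ or } j\in F\}-\{(i,j): i\in F_1\}$ (all edges incident to $F$ and all outgoing edges of nodes in $F_1$ are removed). A directed graph $H$ is partitioned into strongly connected components $H_1,\dots,H_h$ (nodes $i,j$ lie in the same $H_k$ iff there are $(i,j)$- and $(j,i)$-paths using only nodes of $H_k$); the condensation $H^d$ has a vertex $c_k$ per component and an edge $c_k\to c_l$ iff nodes of $H_k$ have directed paths in $H$ to nodes of $H_l$. A component $H_k$ is a source component if $c_k$ is not reachable from any other vertex of $H^d$. An $(X,y)$-path is a directed path (in $G$) from some node of $X$ to the node $y\notin X$; it excludes $F$ if it contains no node of $F$; $(X,y)$-paths are disjoint if they pairwise share only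 $y$. For pairwise disjoint $X,Y,F$ with $|F|\le f$, $X \Rightarrow_{\mathcal V - F} Y$ means: $Y=\emptyset$, or every $y\in Y$ has at least $f+1$ pairwise disjoint $(X,y)$-paths excluding $F$. *)

(* Defs.v *)
From mathcomp Require Import all_boot.
Set Implicit Arguments. Unset Strict Implicit. Unset Printing Implicit Defensive.

(* A finite simple directed graph: vertex set = the finType T, edge relation
   E : rel T (no multi-edges by construction; no self-loops as a hypothesis). *)

Definition reaches_f (T : finType) (E : rel T) (f : nat) (X Y : {set T}) : bool :=
  f.+1 <= #|[set i in X | [exists j in Y, E i j]]|.

Definition condition1 (T : finType) (E : rel T) (f : nat) : Prop :=
  forall L C R F : {set T},
    [disjoint L & C] -> [disjoint L & R] -> [disjoint L & F] ->
    [disjoint C & R] -> [disjoint C & F] -> [disjoint R & F] ->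
    L :|: C :|: R :|: F = setT ->
    L != set0 -> R != set0 -> #|F| <= f ->
    reaches_f E f (L :|: C) R || reaches_f E f (R :|: C) L.

Definition redE (T : finType) (E : rel T) (F F1 : {set T}) : rel T :=
  fun i j => [&& E i j, i \notin F, j \notin F & i \notin F1].

Definition scc (T : finType) (R : rel T) (F : {set T}) (i : T) : {set T} :=
  [set j | [&& j \notin F, connect R i j & connect R j i]].

(* S is (the node set of) a source component of the graph (V - F, R):
   a strongly connected component whose condensation vertex is not reachable
   from any other component, i.e. no node outside S has a path into S. *)
Definition source_component (T : finType) (R : rel T) (F S : {set T}) : Prop :=
  (exists2 i, i \notin F & S = scc R F i) /\
  (forall u s, u \notin F -> u \notin S -> s \in S -> ~~ connect R u s).

Definition Xy_path (T : finType) (E : rel T) (X : {set T}) (y : T) (p : seq T)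
  : bool :=
  if p is x :: s then [&& x \in X, path E x s, last x s == y & uniq p]
  else false.

Definition strongly_reaches (T : finType) (E : rel T) (f : nat)
  (X Y F : {set T}) : Prop :=
  Y = set0 \/
  forall y, y \in Y ->
    exists ps : seq (seq T),
      [/\ size ps = f.+1,
          (forall p, p \in ps -> Xy_path E X y p /\ [disjoint p & F]) &
          (forall i j, i < size ps -> j < size ps -> i != j ->
             forall v, v \in nth [::] ps i -> v \in nth [::] ps j -> v = y)].

(* Main.v *)
Require Import Defs.
From mathcomp Require Import all_boot.
From Stdlib Require Import Classical.
From mathcomp Require Import zify.
From Stdlib Require Import Lia.
Set Implicit Arguments. Unset Strict Implicit. Unset Printing Implicit Defensive.

Section Menger.
Variable T : finType.

Definition grel (g : {set T * T}) : rel T := fun u v => (u, v) \in g.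

Definition good (g : {set T * T}) (A B : {set T}) (w : T * seq T) : Prop :=
  [/\ w.1 \in A, path (grel g) w.1 w.2, last w.1 w.2 \in B, uniq (w.1 :: w.2) &
      ((forall v, v \in w.2 -> v \notin A) /\
      (forall v, v \in w.1 :: w.2 -> v \in B -> v = last w.1 w.2))].

Definition sep (g : {set T * T}) (A B X : {set T}) : Prop :=
  forall a s, a \in A -> path (grel g) a s -> last a s \in B ->
    exists2 v, v \in a :: s & v \in X.

Definition dsj (p q : seq T) : Prop := forall v, v \in p -> v \in q -> False.

Lemma clean_walk (g : {set T * T}) (A B : {set T}) n : forall a s, size s <= n ->
  a \in A -> path (grel g) a s -> last a s \in B ->
  exists w, good g A B w /\ {subset w.1 :: w.2 <= a :: s}.
Proof.
elim: n => [|n IH] a s.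
  case: s => // _ aA _ aB; exists (a, [::]); split => //; split => //=; split => //.
  by move=> v; rewrite inE => /eqP->.
move=> hs aA pas lB.
have [/hasP [v vs vA]|noA] := boolP (has (mem A) s).
  case/splitPr: vs pas hs lB => s1 s2.
  rewrite cat_path /= => /andP [_ /andP [_ p2]] hs lB.
  have hs2 : size s2 <= n.
    by move: hs; rewrite size_cat /= addnS ltnS; apply: leq_trans; apply: leq_addl.
  have lB2 : last v s2 \in B by rewrite last_cat /= in lB.
  have [w [gw sw]] := IH v s2 hs2 vA p2 lB2.
  exists w; split => // u /sw; rewrite !(inE, mem_cat, mem_rcons).
  by case/orP => ->; rewrite ?orTb ?orbT.
have [/hasP [v vs /andP [vB vl]]|noB] :=
   boolP (has (fun v => (v \in B) && (v != last a s)) (a :: s)).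
  move: vs; rewrite inE => /orP [/eqP va|vs].
    exists (a, [::]); split; last by move=> u; rewrite /= !inE => /eqP->; rewrite eqxx.
    split => //=; first by rewrite -va.
    by split => // u; rewrite inE => /eqP->.
  case/splitPr: vs pas hs lB vl noA => s1 s2.
  rewrite cat_path /= => /andP [p1 /andP [e1 p2]] hs lB vl noA.
  case: s2 p2 hs lB vl noA => [|z s2] p2 hs lB vl noA.
    by rewrite last_cat /= eqxx in vl.
  have hs2 : size (rcons s1 v) <= n by move: hs; rewrite size_rcons size_cat /=; lia.
  have p3 : path (grel g) a (rcons s1 v) by rewrite rcons_path p1.
  have lB3 : last a (rcons s1 v) \in B by rewrite last_rcons.
  have [w [gw sw]] := IH a (rcons s1 v) hs2 aA p3 lB3.
  exists w; split => // u /sw; rewrite !(inE, mem_cat, mem_rcons).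
  by case/orP => [->|/orP [->|->]]; rewrite ?orTb ?orbT.
case: (shortenP pas) lB noB => s' ps' us' ss' lB noB.
exists (a, s'); split; last first.
  by move=> u; rewrite /= !inE => /orP [->|/ss' ->]; rewrite ?orbT.
split => //=; split.
- by move=> v /ss' vs; apply: contraNN noA => vA; apply/hasP; exists v.
- move=> v vin vB; apply/eqP; move: noB; apply: contraNT => vl.
  apply/hasP; exists v; last by rewrite vB.
  by move: vin; rewrite !inE => /orP [->|/ss' ->]; rewrite ?orbT.
Qed.

Lemma split_at (a v : T) s : v \in a :: s ->
  exists s1 s2, s = s1 ++ s2 /\ last a s1 = v.
Proof.
rewrite inE => /orP [/eqP->|vs]; first by exists [::], s.
case/splitPr: vs => p1 p2; exists (rcons p1 v), p2.
by rewrite cat_rcons last_rcons.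
Qed.

Lemma first_hit (Z : {set T}) s : forall a, has (mem Z) (a :: s) ->
  exists s1 s2, [/\ s = s1 ++ s2, last a s1 \in Z &
                   forall v, v \in belast a s1 -> v \notin Z].
Proof.
elim: s => [|b s IH] a /=.
  by rewrite orbF => aZ; exists [::], [::].
case aZ: (a \in Z) => /= h; first by exists [::], (b :: s).
have [s1 [s2 [-> l1 b1]]] := IH b h.
exists (b :: s1), s2; split => // v; rewrite /= inE => /orP [/eqP->|/b1 //].
by rewrite aZ.
Qed.

Lemma last_hit (Z : {set T}) s : forall a, has (mem Z) (a :: s) ->
  exists s1 s2, [/\ s = s1 ++ s2, last a s1 \in Z &
                   forall v, v \in s2 -> v \notin Z].
Proof.
elim: s => [|b s IH] a /=.
  by rewrite orbF => aZ; exists [::], [::].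
case h: (has (mem Z) (b :: s)) => /=.
  have [s1 [s2 [-> l1 b1]]] := IH b h.
  by move=> _; exists (b :: s1), s2.
rewrite h orbF => aZ; exists [::], (b :: s); split => // v vs.
apply: contraFN h => vZ; move: vs; rewrite inE => /orP [/eqP <-|vs]; first by rewrite vZ.
by apply/orP; right; apply/hasP; exists v.
Qed.

Lemma path_del_src (g : {set T * T}) x y s : forall a,
  path (grel g) a s -> x \notin belast a s -> path (grel (g :\ (x, y))) a s.
Proof.
elim: s => [|b s IH] a //= /andP [ab ps]; rewrite inE negb_or => /andP [xa xs].
rewrite IH // andbT /grel !inE; rewrite /grel in ab; rewrite ab andbT; apply: contra xa => /eqP [-> _].
by [].
Qed.

Lemma path_del_tgt (g : {set T * T}) x y s : forall a,
  path (grel g) a s -> y \notin s -> path (grel (g :\ (x, y))) a s.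
Proof.
elim: s => [|b s IH] a //= /andP [ab ps]; rewrite inE negb_or => /andP [yb ys].
rewrite IH // andbT /grel !inE; rewrite /grel in ab; rewrite ab andbT; apply: contra yb => /eqP [_ ->].
by [].
Qed.

Lemma path_sub (g g' : {set T * T}) a s : g \subset g' ->
  path (grel g) a s -> path (grel g') a s.
Proof. by move=> /subsetP sg; apply: sub_path => u v; apply: sg. Qed.

Lemma meet (g : {set T * T}) (A B S : {set T}) x y P Q v :
  sep g A B S -> good g A (x |: S) P -> good g (y |: S) B Q ->
  v \in P.1 :: P.2 -> v \in Q.1 :: Q.2 ->
  [/\ v \in S, v = last P.1 P.2 & v = Q.1].
Proof.
case: P => a s; case: Q => b t /= hS [/= aA pas las uas [nA cB]]
  [/= bA pbt lbt ubt [nA' cB']] vP vQ.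
have [s1 [s2 [es ls]]] := split_at vP.
have [t1 [t2 [et lt]]] := split_at vQ.
move: pas; rewrite es cat_path => /andP [p1 p2].
move: pbt; rewrite et cat_path => /andP [_ q2].
have pw : path (grel g) a (s1 ++ t2) by rewrite cat_path p1 ls -lt.
have lw : last a (s1 ++ t2) \in B by rewrite last_cat ls -lt -last_cat -et.
have [w ww wS] := hS a (s1 ++ t2) aA pw lw.
have vS : v \in S.
  move: ww; rewrite -cat_cons mem_cat => /orP [w1|w2].
    have wl : w = last a s.
      apply: cB; last by rewrite !inE wS orbT.
      by rewrite es -cat_cons mem_cat w1.
    have hh : ~~ has (mem (a :: s1)) s2.
      have : uniq ((a :: s1) ++ s2) by rewrite cat_cons -es.
      by rewrite cat_uniq => /and3P [].
    case: s2 es p2 wl hh => [|z s2] es p2 wl hh.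
      by move: wS; rewrite wl es cats0 ls.
    exfalso; move/hasP: hh; apply; exists w => //.
    by rewrite wl es last_cat ls /= mem_last.
  exfalso; have := nA' w; rewrite et mem_cat w2 orbT => /(_ isT).
  by rewrite !inE wS orbT.
split => //.
  rewrite -es; apply: cB; rewrite ?(inE, vS, orbT) //.
move: vQ; rewrite inE => /orP [/eqP //|vt].
by have := nA' v vt; rewrite !inE vS orbT.
Qed.


Definition family (g : {set T * T}) (A B : {set T}) k (P : 'I_k -> T * seq T) :=
  (forall i, good g A B (P i)) /\
  (forall i j, i != j -> dsj ((P i).1 :: (P i).2) ((P j).1 :: (P j).2)).

Lemma menger0 (A B : {set T}) k :
  (forall X, sep set0 A B X -> k <= #|X|) ->
  exists P, @family set0 A B k P.
Proof.
move=> H.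
have hk : k <= #|A :&: B|.
  apply: H => a [|b s] aA //=; last by rewrite /grel inE.
  by move=> _ aB; exists a; rewrite ?inE ?aA ?aB.
exists (fun i => (@enum_val _ (pred_of_set (A :&: B)) (widen_ord hk i), [::])).
split.
  move=> i; have := enum_valP (widen_ord hk i); rewrite inE => /andP [hA hB].
  split => //=; split => // v; rewrite inE => /eqP ->.
  by [].
move=> i j ij v /=; rewrite !inE => /eqP -> /eqP /enum_val_inj /(congr1 val) /=.
by move=> /val_inj eij; move: ij; rewrite eij eqxx.
Qed.


Lemma menger n : forall (g : {set T * T}) (A B : {set T}) k, #|g| <= n ->
  (forall X, sep g A B X -> k <= #|X|) -> exists P, @family g A B k P.
Proof.
elim: n => [|n IH] g A B k hg H.
  have g0 : g = set0 by apply/eqP; rewrite -cards_eq0 -leqn0.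
  by move: H; rewrite g0; apply: menger0.
case: (set_0Vmem g) => [g0 | [[x y] exy]].
  by move: H; rewrite g0; apply: menger0.
set g' := g :\ (x, y).
have sg' : g' \subset g by apply: subsetDl.
have hg' : #|g'| <= n by move: hg; rewrite (cardsD1 (x, y) g) exy.
case: (classic (forall X, sep g' A B X -> k <= #|X|)) => [H' | H'].
  have [P [gP dP]] := IH g' A B k hg' H'.
  exists P; split => // i; have [? p ? ? ?] := gP i; split => //.
  exact: path_sub sg' p.
have [S [sepS ltS]] : exists S, sep g' A B S /\ #|S| < k.
  apply: NNPP => hn; apply: H' => X hX; rewrite leqNgt; apply/negP => hlt.
  by apply: hn; exists X.
set Sx := x |: S; set Sy := y |: S.
have sepx : sep g A B Sx.
  move=> a s aA pas lB.
  have [xin|xnin] := boolP (x \in a :: s); first by exists x => //; rewrite /Sx setU11.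
  have p' : path (grel g') a s.
    apply: path_del_src pas _; apply: contra xnin; exact: mem_belast.
  have [v vin vS] := sepS a s aA p' lB; exists v => //; by rewrite /Sx inE vS orbT.
have sepy : sep g A B Sy.
  move=> a s aA pas lB.
  have [yin|ynin] := boolP (y \in a :: s); first by exists y => //; rewrite /Sy setU11.
  have p' : path (grel g') a s.
    apply: path_del_tgt pas _; by apply: contra ynin => ys; rewrite inE ys orbT.
  have [v vin vS] := sepS a s aA p' lB; exists v => //; by rewrite /Sy inE vS orbT.
have kx := H _ sepx; have ky := H _ sepy.
have yS : y \notin S.
  by apply/negP => yS; move: ky; rewrite /Sy cardsU1 yS /= add0n leqNgt ltS.
have cSy : #|Sy| <= k by rewrite /Sy cardsU1 yS.
have HP : forall X, sep g' A Sx X -> k <= #|X|.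
  move=> X hX; apply: H => a s aA pas lB.
  have hx : has (mem Sx) (a :: s).
    by have [v vin vS] := sepx a s aA pas lB; apply/hasP; exists v.
  have [s1 [s2 [es l1 b1]]] := first_hit hx.
  move: pas; rewrite es cat_path => /andP [p1 _].
  have p1' : path (grel g') a s1.
    by apply: path_del_src p1 _; apply/negP => /b1; rewrite /Sx setU11.
  have [v vin vX] := hX a s1 aA p1' l1; exists v => //.
  by rewrite -cat_cons mem_cat vin.
have HQ : forall X, sep g' Sy B X -> k <= #|X|.
  move=> X hX; apply: H => a s aA pas lB.
  have hy : has (mem Sy) (a :: s).
    by have [v vin vS] := sepy a s aA pas lB; apply/hasP; exists v.
  have [s1 [s2 [es l1 b2]]] := last_hit hy.
  move: pas lB; rewrite es cat_path last_cat => /andP [_ p2] lB.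
  have p2' : path (grel g') (last a s1) s2.
    by apply: path_del_tgt p2 _; apply/negP => /b2; rewrite /Sy setU11.
  have [v vin vX] := hX _ s2 l1 p2' lB; exists v => //.
  move: vin; rewrite inE => /orP [/eqP ->|vs2].
    by have := mem_last a s1; rewrite -cat_cons mem_cat => ->.
  by rewrite inE mem_cat vs2 !orbT.
have [P [gP dP]] := IH g' A Sx k hg' HP.
have [Q [gQ dQ]] := IH g' Sy B k hg' HQ.
have surjQ : forall v, v \in Sy -> exists j, (Q j).1 = v.
  have inj : injective (fun j => (Q j).1).
    move=> j1 j2 /= e; apply/eqP; apply: contraT => ne.
    by have := dQ j1 j2 ne (Q j1).1 (mem_head _ _); rewrite e mem_head => /(_ isT).
  have : (fun j => (Q j).1) @: [set: 'I_k] == Sy.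
    rewrite eqEcard card_imset // cardsT card_ord cSy andbT.
    by apply/subsetP => v /imsetP [j _ ->]; have [] := gQ j.
  move=> /eqP <- v /imsetP [j _ ->]; by exists j.
pose sig v := if v == x then y else v.
pose e i := last (P i).1 (P i).2.
have eSx : forall i, e i \in Sx by move=> i; have [] := gP i.
have hsig : forall i, sig (e i) \in Sy.
  move=> i; rewrite /sig; case: ifP => [_|/negbT ex]; first by rewrite /Sy setU11.
  by have := eSx i; rewrite /Sx /Sy !inE (negbTE ex) /= => ->; rewrite orbT.
have [tau htau] := fin_all_exists (fun i => surjQ _ (hsig i)).
pose G i := ((P i).1, (P i).2 ++ (if e i == x then y :: (Q (tau i)).2
                                  else (Q (tau i)).2)).
have Gmem : forall i v, v \in (G i).1 :: (G i).2 ->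
   v \in (P i).1 :: (P i).2 \/ v \in (Q (tau i)).1 :: (Q (tau i)).2.
  move=> i v; rewrite /G /= -cat_cons mem_cat => /orP [->|]; first by left.
  rewrite htau /sig; case: ifP => _ vin; right; rewrite ?inE ?vin ?orbT //.
have hG : forall i, exists w, good g A B w /\ {subset w.1 :: w.2 <= (G i).1 :: (G i).2}.
  move=> i; have [aA pa la ua _] := gP i; have [bA pb lb ub _] := gQ (tau i).
  apply: (@clean_walk g A B (size (G i).2)) => //=.
    rewrite cat_path (path_sub sg' pa) /=; move: pb; rewrite htau /sig -/(e i).
    case: ifP => [/eqP ex | _] pb /=; last exact: path_sub sg' pb.
    by rewrite /grel -/(e i) ex exy; exact: path_sub sg' pb.
  rewrite last_cat -/(e i); move: lb; rewrite htau /sig.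
  by case: ifP.
have [P' hP'] := fin_all_exists hG.
exists P'; split => [i|i j ij v vi vj]; first by have [] := hP' i.
have [_ si] := hP' i; have [_ sj] := hP' j.
have einj : forall i j, e i = e j -> i = j.
  move=> i1 j1 eij; apply/eqP; apply: contraT => ne.
  by have := dP i1 j1 ne (e i1) (mem_last _ _); rewrite eij mem_last => /(_ isT).
have sigS : forall i w, w \in S -> sig (e i) = w -> e i = w.
  move=> i1 w wS; rewrite /sig; case: ifP => // _ yw.
  by move: yS; rewrite yw wS.
have siginj : forall i j, sig (e i) = sig (e j) -> e i = e j.
  move=> i1 j1; rewrite /sig; case: ifP => [/eqP -> |/negbT n1];
    case: ifP => [/eqP -> //|/negbT n2].
  - move=> ye; have := eSx j1; rewrite /Sx in_setU1 (negbTE n2) /= -ye => yS'.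
    by move: yS; rewrite yS'.
  - move=> ey; have := eSx i1; rewrite /Sx in_setU1 (negbTE n1) /= ey => yS'.
    by move: yS; rewrite yS'.
  - by [].
case: (Gmem i v (si v vi)) => [vPi|vQi]; case: (Gmem j v (sj v vj)) => [vPj|vQj].
- exact: dP ij v vPi vPj.
- have [vS ve vq] := meet sepS (gP i) (gQ (tau j)) vPi vQj.
  move: vq; rewrite htau => /esym /(sigS j _ vS) ej.
  by move: ij; rewrite (einj i j (etrans (esym ve) (esym ej))) eqxx.
- have [vS ve vq] := meet sepS (gP j) (gQ (tau i)) vPj vQi.
  move: vq; rewrite htau => /esym /(sigS i _ vS) ei.
  by move: ij; rewrite (einj i j (etrans ei ve)) eqxx.
- have [tij|tij] := eqVneq (tau i) (tau j).
    have := htau i; rewrite tij htau => /siginj /einj eij.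
    by move: ij; rewrite eij eqxx.
  exact: dQ tij v vQi vQj.
Qed.

End Menger.

Lemma disjP (T : finType) (A B : {set T}) :
  (forall v, v \in A -> v \in B -> False) -> [disjoint A & B].
Proof. by move=> H; apply/pred0P => v /=; apply/negP => /andP [] /H. Qed.

Lemma path_tgt (T : finType) (g : {set T * T}) (Pr : pred T) a s :
  (forall u v, (u, v) \in g -> Pr v) -> path (grel g) a s -> all Pr s.
Proof.
move=> H; elim: s a => [|b s IH] a //= /andP [ab ps].
by rewrite (H _ _ ab) (IH b ps).
Qed.

Theorem corollary2 (T : finType) (E : rel T) (f : nat)
  (Hsimple : irreflexive E) (Hcond : condition1 E f)
  (F F1 S : {set T})
  (HF1sub : F1 \subset ~: F) (HF : #|F| <= f) (HF1 : #|F1| <= f)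
  (HS : source_component (redE E F F1) F S) :
  strongly_reaches E f S (~: (F :|: S)) F.
Proof.
right => y0 hy0.
have [[i0 i0F eS] src] := HS.
have SF : forall s, s \in S -> s \notin F by move=> s; rewrite eS inE => /and3P [].
have i0S : i0 \in S by rewrite eS inE i0F !connect0.
move: hy0; rewrite !inE negb_or => /andP [y0F y0S].
pose Z := y0 |: F.
pose g := [set uv : T * T | [&& E uv.1 uv.2, uv.1 \notin Z & uv.2 \notin Z]].
pose B := [set u | (u \notin Z) && E u y0].
have Hsep : forall X, sep g S B X -> f.+1 <= #|X|.
  move=> X hX; rewrite ltnNge; apply/negP => hXf.
  pose r : rel T := fun u v => [&& (u, v) \in g, u \notin X & v \notin X].
  pose R := [set v | (v == y0) || [exists b in B,
               [&& v \notin X, v \notin F, b \notin X & connect r v b]]].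
  have hr : forall a p, path r a p -> path (grel g) a p /\ all (fun v => v \notin X) p.
    move=> a p; elim: p a => [|b p IH] a //= /andP [/and3P [ab _ bX] pp].
    by have [-> ->] := IH b pp; rewrite /grel ab bX.
  have SR : forall s, s \in S -> s \notin R.
    move=> s sS; rewrite inE negb_or; apply/andP; split.
      by apply: contraNN y0S => /eqP <-.
    apply/negP => /existsP [b /andP [bB /and4P [sX sF bX c]]].
    case/connectP: c => p pr lp; have [pg pX] := hr _ _ pr.
    have lB : last s p \in B by rewrite -lp.
    have [v vin vX] := hX s p sS pg lB.
    move: vin; rewrite inE => /orP [/eqP vs|vp]; first by move: sX; rewrite -vs vX.
    by move/allP: pX => /(_ v vp); rewrite vX.
  have RF : forall v, v \in R -> v \notin F.
    move=> v; rewrite inE => /orP [/eqP -> //|/existsP [b /andP [_ /and4P [_ ? _ _]]]].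
    by [].
  have y0R : y0 \in R by rewrite inE eqxx.
  pose C := ~: (F :|: S :|: R).
  have := Hcond S C R F.
  have dSC : [disjoint S & C] by apply: disjP => v vS; rewrite !inE vS /= orbT.
  have dSR : [disjoint S & R] by apply: disjP => v /SR /negP.
  have dSF : [disjoint S & F] by apply: disjP => v /SF /negP.
  have dCR : [disjoint C & R] by apply: disjP => v; rewrite !inE => /negP H1 H2; apply: H1; rewrite H2 !orbT.
  have dCF : [disjoint C & F] by apply: disjP => v; rewrite !inE => /negP H1 H2; apply: H1; rewrite H2.
  have dRF : [disjoint R & F] by apply: disjP => v /RF /negP.
  have hU : S :|: C :|: R :|: F = setT.
    apply/setP => v; rewrite in_setT !in_setU in_setC !in_setU.
    by case: (v \in S); case: (v \in R); case: (v \in F).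
  have S0 : S != set0 by apply/set0Pn; exists i0.
  have R0 : R != set0 by apply/set0Pn; exists y0.
  move=> /(_ dSC dSR dSF dCR dCF dRF hU S0 R0 HF) /orP [].
    rewrite /reaches_f => h.
    suff h2 : #|[set i in S :|: C | [exists j in R, E i j]]| <= #|X|.
      by have := leq_trans h (leq_trans h2 hXf); rewrite ltnn.
    apply: subset_leq_card; apply/subsetP => i; rewrite inE.
    case/andP => hi /existsP [j /andP [jR Eij]].
    have iF : i \notin F.
      move: hi; rewrite in_setU => /orP [/SF //|].
      by rewrite in_setC !in_setU !negb_or => /andP [/andP [] ].
    have iR : i \notin R.
      move: hi; rewrite in_setU => /orP [/SR //|].
      by rewrite in_setC !in_setU !negb_or => /andP [_].
    have iy : i != y0 by apply: contraNN iR => /eqP ->.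
    apply/negPn; apply/negP => iX; move/negP: iR; apply; rewrite inE; apply/orP; right.
    have [jy|jy] := eqVneq j y0.
      apply/existsP; exists i; rewrite iX iF connect0 !andbT /=.
      by rewrite !inE negb_or iy iF -jy Eij.
    move: jR; rewrite inE (negbTE jy) /= => /existsP [b /andP [bB /and4P [jX jF bX c]]].
    apply/existsP; exists b; rewrite bB iX iF bX /=.
    apply: connect_trans c; apply: connect1.
    by rewrite /r iX jX /= !andbT inE /= Eij !inE !negb_or iy iF jy jF.
  rewrite /reaches_f => h.
  suff h2 : #|[set i in R :|: C | [exists j in S, E i j]]| <= #|F1|.
    by have := leq_trans h (leq_trans h2 HF1); rewrite ltnn.
  apply: subset_leq_card; apply/subsetP => i; rewrite inE.
  case/andP => hi /existsP [j /andP [jS Eij]].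
  have iF : i \notin F.
    move: hi; rewrite in_setU => /orP [/RF //|].
    by rewrite in_setC !in_setU !negb_or => /andP [/andP [] ].
  have iS : i \notin S.
    move: hi; rewrite in_setU => /orP [iR|].
      by apply/negP => iS; move: (SR i iS); rewrite iR.
    by rewrite in_setC !in_setU !negb_or => /andP [/andP [_] ].
  apply/negPn; apply/negP => iF1.
  have := src i j iF iS jS; rewrite connect1 //.
  by rewrite /redE Eij iF (SF j jS) iF1.
have [P [gP dP]] := menger (leqnn #|g|) Hsep.
have gZ : forall a s, path (grel g) a s -> all (fun v => v \notin Z) s.
  by move=> a s; apply: path_tgt => u v; rewrite inE => /and3P [].
have gE : forall a s, path (grel g) a s -> path E a s.
  by move=> a s; apply: sub_path => u v; rewrite /grel inE => /andP [].
pose W (n : nat) := let w := P (inord n) in w.1 :: rcons w.2 y0.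
have vW : forall n v, v \in W n -> v = y0 \/ v \in (P (inord n)).1 :: (P (inord n)).2.
  move=> n v; rewrite /W /= inE mem_rcons inE => /or3P [/eqP ->|/eqP ->|vs].
  - by right; rewrite mem_head.
  - by left.
  - by right; rewrite inE vs orbT.
exists (mkseq W f.+1); split; first by rewrite size_mkseq.
  move=> p /mapP [n _ ->]; rewrite /W.
  have [wS pw lw uw [nA cB]] := gP (inord n).
  set w := P (inord n) in wS pw lw uw nA cB *.
  have aZ := gZ _ _ pw.
  have y0w : y0 \notin w.1 :: w.2.
    rewrite inE negb_or; apply/andP; split.
      by apply: contraNN y0S => /eqP ->.
    by apply/negP => /(allP aZ); rewrite !inE eqxx.
  split.
    rewrite /Xy_path wS rcons_path (gE _ _ pw) last_rcons eqxx /=.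
    have u2 : uniq (rcons (w.1 :: w.2) y0) by rewrite rcons_uniq y0w uw.
    move: lw; rewrite inE => /andP [_ ->] /=.
    by move: u2.
  rewrite disjoint_has; apply/hasPn => v; rewrite inE mem_rcons inE.
  case/or3P => [/eqP ->|/eqP ->|vs] //; first by rewrite SF.
  by have := allP aZ v vs; rewrite !inE negb_or => /andP [].
move=> i j; rewrite size_mkseq => hi hj ij v.
rewrite !nth_mkseq // => /vW [//|vi] /vW [//|vj].
exfalso; apply: (dP (inord i) (inord j) _ v vi vj).
apply: contra ij => /eqP /(congr1 val) /=; rewrite !inordK // => ->.
by [].
Qed.
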